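(* Let $(R,\mathfrak m,k)$ be a commutative noetherian local ring with $\mathfrak m^4=0$ and $H_R(-1)=0$. Suppose $a,b\in\mathfrak m\smallsetminus\mathfrak m^2$ form an exact pair of zero divisors. Then: (1) the initial forms $a^*,b^*$ in $\operatorname{gr}_{\mathfrak m}(R)$ form an exact pair of zero divisors in $\operatorname{gr}_{\mathfrak m}(R)$; (2) the graded rings $\operatorname{gr}_{\mathfrak m/aR}(R/aR)$ and $\operatorname{gr}_{\mathfrak m}(R)/a^*\operatorname{gr}_{\mathfrak m}(R)$ are naturally isomorphic (via the map induced by $R\to R/aR$); (3) $H_{\operatorname{gr}_{\mathfrak m}(R)/a^*\operatorname{gr}_{\mathfrak m}(R)}(t)=H_{R/aR}(t)=H_R(t)(1+t)^{-1}$.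
   Context: $H_R(t)=\sum_{n\ge0}\operatorname{rank}_k(\mathfrak m^n/\mathfrak m^{n+1})t^n$ is the Hilbert series of the local ring $R$ (for graded rings, the Hilbert series is $\sum_n \operatorname{rank}_k(\text{degree-}n\text{ part})t^n$). $\operatorname{gr}_{\mathfrak m}(R)=\bigoplus_{n\ge0}\mathfrak m^n/\mathfrak m^{n+1}$ is the associated graded ring, and $r^*$ denotes the initial form of $r\in R$. Elements $a,b$ of a ring form an exact pair of zero divisors if they are nonzero non-units with $(0:a)=bR$ and $(0:b)=aR$. *)

(* Defs.v *)
From HB Require Import structures.
From mathcomp Require Import all_boot all_order all_algebra.
Set Implicit Arguments. Unset Strict Implicit. Unset Printing Implicit Defensive.
Import Order.TTheory GRing.Theory Num.Theory.
Local Open Scope ring_scope.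

Section CommAlg.
Variable R : comNzRingType.

(* units / the maximal ideal of a local ring (= the non-units) *)
Definition is_unit (x : R) : Prop := exists y, x * y = 1.
Definition maxid (x : R) : Prop := ~ is_unit x.

Definition is_ideal (I : R -> Prop) : Prop :=
  [/\ I 0, (forall x y, I x -> I y -> I (x + y)) & (forall r x, I x -> I (r * x))].

Definition noetherian : Prop :=
  forall I : nat -> R -> Prop, (forall n, is_ideal (I n)) ->
    (forall n x, I n x -> I n.+1 x) ->
    exists N, forall n x, (N <= n)%N -> I n x -> I N x.

(* local: the non-units form an ideal (equivalently: a unique maximal ideal) *)
Definition local_ring : Prop := is_ideal maxid.

Inductive ideal_prod (I J : R -> Prop) : R -> Prop :=
  | ip_zero : ideal_prod I J 0
  | ip_prod x y : I x -> J y -> ideal_prod I J (x * y)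
  | ip_add u v : ideal_prod I J u -> ideal_prod I J v -> ideal_prod I J (u + v).

Fixpoint mpow (n : nat) : R -> Prop :=
  match n with
  | 0 => fun _ => True
  | n'.+1 => ideal_prod maxid (mpow n')
  end.

(* rank_k (m^n / m^(n+1)) = d, k = R/m, written out literally: there are
   d elements of m^n whose classes form a k-basis of m^n/m^(n+1) *)
Definition hilb_rank (n d : nat) : Prop :=
  exists x : 'I_d -> R, (forall i, mpow n (x i)) /\
    (forall y, mpow n y -> exists r : 'I_d -> R,
        mpow n.+1 (y - \sum_(i < d) r i * x i)) /\
    (forall r : 'I_d -> R, mpow n.+1 (\sum_(i < d) r i * x i) ->
        forall i, maxid (r i)).

Definition exact_pair (a b : R) : Prop :=
  [/\ a != 0 /\ b != 0, ~ is_unit a, ~ is_unit b,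
      (forall x, a * x = 0 <-> exists y, x = b * y) &
      (forall x, b * x = 0 <-> exists y, x = a * y)].

End CommAlg.

(* (G, pi) is (a model of) the associated graded ring gr_m(R) = (+)_n m^n/m^(n+1):
   pi n : m^n -> G is the map x |-> class of x in degree n. These axioms
   determine G up to unique graded isomorphism. *)
Definition is_assoc_graded (R G : comNzRingType) (pi : nat -> R -> G) : Prop :=
  [/\ (forall n x y, mpow n x -> mpow n y -> pi n (x + y) = pi n x + pi n y),
      (forall n x, mpow n x -> (pi n x = 0 <-> mpow n.+1 x)),
      (forall i j x y, mpow i x -> mpow j y -> pi (i + j)%N (x * y) = pi i x * pi j y),
      (forall g : G, exists N (x : nat -> R),
          (forall n, mpow n (x n)) /\ g = \sum_(n < N) pi n (x n)) &
      (forall N (x : nat -> R), (forall n, mpow n (x n)) ->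
          \sum_(n < N) pi n (x n) = 0 -> forall n, (n < N)%N -> mpow n.+1 (x n))].

Definition gr_hom (R G : comNzRingType) (pi : nat -> R -> G) (n : nat) (g : G) : Prop :=
  exists x, mpow n x /\ g = pi n x.

(* rank of the degree-n part T_n of a graded ring over its degree-0 part T_0
   (a field in our situation, identified with k) *)
Definition graded_rank (T : comNzRingType) (hom : nat -> T -> Prop) (n d : nat) : Prop :=
  exists x : 'I_d -> T, (forall i, hom n (x i)) /\
    (forall y, hom n y -> exists c : 'I_d -> T, (forall i, hom 0%N (c i)) /\
        y = \sum_(i < d) c i * x i) /\
    (forall c : 'I_d -> T, (forall i, hom 0%N (c i)) ->
        \sum_(i < d) c i * x i = 0 -> forall i, c i = 0).

(* Main.v *)
Require Import Defs.
From HB Require Import structures.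
From mathcomp Require Import all_boot all_order all_algebra.
From Stdlib Require Import ClassicalEpsilon Classical_Prop.
From mathcomp Require Import ring zify.
Set Implicit Arguments. Unset Strict Implicit. Unset Printing Implicit Defensive.
Import Order.TTheory GRing.Theory Num.Theory.
Local Open Scope ring_scope.


Section Basic.
Variable R : comNzRingType.
Hypothesis hloc : local_ring R.

Lemma maxid0 : maxid (0 : R). Proof. by case: hloc. Qed.
Lemma maxidD (x y : R) : maxid x -> maxid y -> maxid (x + y).
Proof. by case: hloc => _ H _; apply: H. Qed.
Lemma maxidM (r x : R) : maxid x -> maxid (r * x).
Proof. by case: hloc => _ _ H; apply: H. Qed.
Lemma maxidMr (r x : R) : maxid x -> maxid (x * r).
Proof. by rewrite mulrC; apply: maxidM. Qed.
Lemma maxidN (x : R) : maxid x -> maxid (- x).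
Proof. by move=> hx; rewrite -mulN1r; apply: maxidM. Qed.
Lemma maxidB (x y : R) : maxid x -> maxid y -> maxid (x - y).
Proof. by move=> hx hy; apply: maxidD => //; apply: maxidN. Qed.
Lemma maxid1 : ~ maxid (1 : R).
Proof. by apply; exists 1; rewrite mulr1. Qed.
Lemma unit_or_max (x : R) : is_unit x \/ maxid x.
Proof. by case: (classic (is_unit x)) => H; [left|right]. Qed.
Lemma not_max_unit (x : R) : ~ maxid x -> is_unit x.
Proof. by case: (unit_or_max x). Qed.

Lemma ideal_prod_mul (I J : R -> Prop) r x :
  (forall r y, J y -> J (r * y)) -> ideal_prod I J x -> ideal_prod I J (r * x).
Proof.
move=> hJ; elim=> [|u v hu hv|u v _ IHu _ IHv].
- by rewrite mulr0; apply: ip_zero.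
- by rewrite mulrCA; apply: ip_prod => //; apply: hJ.
- by rewrite mulrDr; apply: ip_add.
Qed.

Lemma mpow_ideal n : is_ideal (@mpow R n).
Proof.
elim: n => [|n [h0 hD hM]]; first by split.
split => /=.
- exact: ip_zero.
- by move=> x y; apply: ip_add.
- by move=> r x; apply: ideal_prod_mul.
Qed.

Lemma mpow0 n : mpow n (0 : R). Proof. by case: (mpow_ideal n). Qed.
Lemma mpowD n (x y : R) : mpow n x -> mpow n y -> mpow n (x + y).
Proof. by case: (mpow_ideal n) => _ H _; apply: H. Qed.
Lemma mpowM n (r x : R) : mpow n x -> mpow n (r * x).
Proof. by case: (mpow_ideal n) => _ _ H; apply: H. Qed.
Lemma mpowMr n (r x : R) : mpow n x -> mpow n (x * r).
Proof. by rewrite mulrC; apply: mpowM. Qed.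
Lemma mpowN n (x : R) : mpow n x -> mpow n (- x).
Proof. by move=> hx; rewrite -mulN1r; apply: mpowM. Qed.
Lemma mpowB n (x y : R) : mpow n x -> mpow n y -> mpow n (x - y).
Proof. by move=> hx hy; apply: mpowD => //; apply: mpowN. Qed.
Lemma mpow_sum n (I : finType) (F : I -> R) :
  (forall i, mpow n (F i)) -> mpow n (\sum_i F i).
Proof.
move=> hF; apply: (big_ind (@mpow R n)); [exact: mpow0|exact: mpowD|by []].
Qed.

Lemma mpowS n (x : R) : mpow n.+1 x -> mpow n x.
Proof.
elim: n x => [//|n IH] x /=.
elim=> [|u v hu hv|u v _ IHu _ IHv]; first exact: ip_zero.
- by apply: ip_prod => //; apply: IH.
- by apply: ip_add.
Qed.

Lemma mpow_le m n (x : R) : (m <= n)%N -> mpow n x -> mpow m x.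
Proof.
move=> /subnK <-; elim: (n - m)%N => [//|d IH] hx.
by apply: IH; apply: mpowS; exact: hx.
Qed.

Lemma mpow1 (x : R) : mpow 1 x <-> maxid x.
Proof.
split.
- elim=> [|u v hu hv|u v _ IHu _ IHv]; first exact: maxid0.
  + exact: maxidMr.
  + exact: maxidD.
- by move=> hx; rewrite -[x]mulr1; apply: ip_prod.
Qed.

Lemma mpow_maxM n (x y : R) : maxid x -> mpow n y -> mpow n.+1 (x * y).
Proof. by move=> hx hy; apply: ip_prod. Qed.

Lemma mpowMM i j (x y : R) : mpow i x -> mpow j y -> mpow (i + j) (x * y).
Proof.
elim: i x => [|i IH] x hx hy; first by rewrite add0n; apply: mpowM.
rewrite addSn /=; elim: hx => [|u v hu hv|u v _ IHu _ IHv].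
- by rewrite mul0r; apply: ip_zero.
- by rewrite -mulrA; apply: ip_prod => //; apply: IH.
- by rewrite mulrDl; apply: ip_add.
Qed.

End Basic.


Definition bP (P : Prop) : bool := if excluded_middle_informative P then true else false.
Lemma bPP (P : Prop) : reflect P (bP P).
Proof. by rewrite /bP; case: excluded_middle_informative => H; constructor. Qed.

Section Field.
Variable R : comNzRingType.
Hypothesis hloc : local_ring R.

Definition mpred : pred R := fun x => bP (maxid x).
Lemma mpredE x : (x \in mpred) = bP (maxid x). Proof. by []. Qed.

Lemma mpred_closed : idealr_closed mpred.
Proof.
split.
- by rewrite mpredE; apply/bPP; apply: maxid0.
- by rewrite mpredE; apply/bPP; apply: maxid1.
- move=> c u v; rewrite !mpredE => /bPP hu /bPP hv; apply/bPP.
  by apply: maxidD => //; apply: maxidM.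
Qed.

Definition mI : idealr R :=
  HB.pack mpred (GRing.isZmodClosed.Build _ mpred (idealr_closedB mpred_closed))
    (isProperIdeal.Build _ mpred (idealr_closed_nontrivial mpred_closed)).

Definition kq := {ideal_quot mI}.
Definition proj (x : R) : kq := \pi_kq%qT x.

Lemma projD x y : proj (x + y) = proj x + proj y.
Proof. by rewrite /proj !piE. Qed.
Lemma projM x y : proj (x * y) = proj x * proj y.
Proof. by rewrite /proj !piE. Qed.
Lemma projN x : proj (- x) = - proj x.
Proof. by rewrite /proj !piE. Qed.
Lemma projB x y : proj (x - y) = proj x - proj y.
Proof. by rewrite projD projN. Qed.
Lemma projone : proj 1 = 1.
Proof. by rewrite /proj !piE. Qed.
Lemma proj0 : proj 0 = 0.
Proof. by rewrite /proj !piE. Qed.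
Lemma proj_eq x y : proj x = proj y <-> maxid (x - y).
Proof.
rewrite /proj; split.
- by move/eqP; rewrite -Quotient.idealrBE => /bPP.
- by move=> H; apply/eqP; rewrite -Quotient.idealrBE; apply/bPP.
Qed.
Lemma proj_eq0 x : proj x = 0 <-> maxid x.
Proof. by rewrite -proj0 proj_eq subr0. Qed.
Definition lft (z : kq) : R := repr z.
Lemma lftK z : proj (lft z) = z.
Proof. exact: reprK. Qed.
Lemma lft_proj x : maxid (lft (proj x) - x).
Proof. by apply/proj_eq; rewrite lftK. Qed.

Definition uinv (x : R) : R :=
  match excluded_middle_informative (is_unit x) with
  | left H => proj1_sig (constructive_indefinite_description _ H)
  | right _ => 0 end.
Lemma uinvP x : is_unit x -> x * uinv x = 1.
Proof.
rewrite /uinv; case: excluded_middle_informative => // H _.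
by case: constructive_indefinite_description.
Qed.

Definition kinv (z : kq) : kq := proj (uinv (lft z)).

Lemma kmulVf z : z != 0 -> kinv z * z = 1.
Proof.
move=> nz; rewrite /kinv -{2}(lftK z) -projM mulrC uinvP ?projone //.
apply: not_max_unit => hm; move: nz; rewrite -(lftK z).
by move/proj_eq0: hm => ->; rewrite eqxx.
Qed.
Lemma kinv0 : kinv 0 = 0.
Proof.
rewrite /kinv /uinv; case: excluded_middle_informative => [H|_]; last exact: proj0.
exfalso; have: maxid (lft 0) by apply/proj_eq0; rewrite lftK.
by move=> hm; exact: hm H.
Qed.

HB.instance Definition _ := GRing.ComNzRing.on kq.
HB.instance Definition _ := GRing.ComNzRing_isField.Build kq kmulVf kinv0.

Definition kk : fieldType := kq.

End Field.


Section Graded.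
Variables (R G : comNzRingType) (pi : nat -> R -> G).
Hypothesis hg : is_assoc_graded pi.

Lemma gpi_add n x y : mpow n x -> mpow n y -> pi n (x + y) = pi n x + pi n y.
Proof. by case: hg => H _ _ _ _; apply: H. Qed.
Lemma gpi_zero n : pi n 0 = 0.
Proof.
have := gpi_add (@mpow0 R n) (@mpow0 R n); rewrite addr0 => e.
by have := addrK (pi n 0) (pi n 0); rewrite -e subrr => <-.
Qed.
Lemma gpi_eq0 n x : mpow n x -> (pi n x = 0 <-> mpow n.+1 x).
Proof. by case: hg => _ H _ _ _; apply: H. Qed.
Lemma gpi_high n x : mpow n.+1 x -> pi n x = 0.
Proof. by move=> hx; apply/(gpi_eq0 (mpowS hx)). Qed.
Lemma gpi_mul i j x y : mpow i x -> mpow j y -> pi (i + j)%N (x * y) = pi i x * pi j y.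
Proof. by case: hg => _ _ H _ _; apply: H. Qed.
Lemma gpi_opp n x : mpow n x -> pi n (- x) = - pi n x.
Proof.
move=> hx; apply/eqP; rewrite -subr_eq0 opprK addrC -gpi_add ?subrr ?gpi_zero //.
exact: mpowN.
Qed.
Lemma gpi_sub n x y : mpow n x -> mpow n y -> pi n (x - y) = pi n x - pi n y.
Proof. by move=> hx hy; rewrite gpi_add ?gpi_opp //; apply: mpowN. Qed.
Lemma gpi_eqm n x y : mpow n x -> mpow n y -> mpow n.+1 (x - y) -> pi n x = pi n y.
Proof.
move=> hx hy hxy; apply/eqP; rewrite -subr_eq0 -gpi_sub //.
by apply/eqP/(gpi_eq0 (mpowB hx hy)).
Qed.
Lemma gpi_sum n (I : finType) (F : I -> R) :
  (forall i, mpow n (F i)) -> pi n (\sum_i F i) = \sum_i pi n (F i).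
Proof.
move=> hF.
suff [] : pi n (\sum_i F i) = \sum_i pi n (F i) /\ mpow n (\sum_i F i) by [].
apply: (big_ind2 (fun a b => pi n a = b /\ mpow n a)).
- by rewrite gpi_zero; split => //; apply: mpow0.
- by move=> a b c d [<- ha] [<- hc]; rewrite gpi_add //; split => //; apply: mpowD.
- by move=> i _; split.
Qed.
Lemma gpi_mul1 n x y : mpow 1 x -> mpow n y -> pi n.+1 (x * y) = pi 1 x * pi n y.
Proof. by move=> hx hy; rewrite -(gpi_mul hx hy). Qed.
Lemma gpi_decomp g : exists N (x : nat -> R), (forall n, mpow n (x n)) /\ g = \sum_(n < N) pi n (x n).
Proof. by case: hg => _ _ _ H _; apply: H. Qed.
Lemma gpi_comp N (x : nat -> R) : (forall n, mpow n (x n)) ->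
  \sum_(n < N) pi n (x n) = 0 -> forall n, (n < N)%N -> mpow n.+1 (x n).
Proof. by case: hg => _ _ _ _ H; apply: H. Qed.
Lemma gpi01 : pi 0 1 = 1.
Proof.
have [N [x [hx e]]] := gpi_decomp 1.
have : pi 0 1 * 1 = 1; last by rewrite mulr1.
rewrite {1}e mulr_sumr {1}e; apply: eq_bigr => n _.
by rewrite -(gpi_mul (I : @mpow R 0 1) (hx n)) mul1r.
Qed.
Lemma widen_sum N P (x : nat -> R) : (N <= P)%N ->
  \sum_(n < N) pi n (x n) = \sum_(n < P) pi n (if (n < N)%N then x n else 0).
Proof.
move=> hNP; rewrite (big_ord_widen P (fun n => pi n (x n))) // big_mkcond.
by apply: eq_bigr => i _; case: ifP => _ //; rewrite gpi_zero.
Qed.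

Lemma gsingle n (F : nat -> R) : (forall m, (m < n)%N -> F m = 0) ->
  \sum_(m < n.+1) pi m (F m) = pi n (F n).
Proof.
move=> hF; rewrite big_ord_recr /= big1 ?add0r // => i _.
by rewrite hF ?gpi_zero.
Qed.

Lemma factor_sum (t : R) N (x : nat -> R) :
  (forall n, exists z, mpow n.-1 z /\ ((n < N)%N -> pi n (x n) = pi 1 t * pi n.-1 z)) ->
  exists g', \sum_(n < N) pi n (x n) = pi 1 t * g'.
Proof.
move=> hzz.
pose z n := proj1_sig (constructive_indefinite_description _ (hzz n)).
have hzP n : mpow n.-1 (z n) /\ ((n < N)%N -> pi n (x n) = pi 1 t * pi n.-1 (z n)).
  by rewrite /z; case: constructive_indefinite_description.
exists (\sum_(n < N) pi n.-1 (z n)); rewrite mulr_sumr; apply: eq_bigr => n _.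
by case: (hzP n) => _; apply.
Qed.

End Graded.

Lemma nil4_not_unit (G : comNzRingType) (x : G) : x * x * x * x = 0 -> ~ is_unit x.
Proof.
move=> h4 [y hy].
have : (x * y) * (x * y) * (x * y) * (x * y) = 1 by rewrite hy !mulr1.
have -> : (x * y) * (x * y) * (x * y) * (x * y) = (x * x * x * x) * (y * y * y * y) by ring.
by rewrite h4 mul0r => /eqP; rewrite eq_sym oner_eq0.
Qed.


Section Coord.
Variable R : comNzRingType.
Hypothesis hloc : local_ring R.
Variable h : nat -> nat.
Local Unset Implicit Arguments.
Variable X : forall n, 'I_(h n) -> R.
Hypothesis hXm : forall n i, mpow n (X n i).
Hypothesis hXs : forall n y, mpow n y ->
  exists r : 'I_(h n) -> R, mpow n.+1 (y - \sum_i r i * X n i).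
Hypothesis hXi : forall n (r : 'I_(h n) -> R),
  mpow n.+1 (\sum_i r i * X n i) -> forall i, maxid (r i).

Local Notation k := (kk hloc).
Local Notation proj := (proj hloc).
Local Notation lft := (@lft R hloc).

Definition coef n y : 'I_(h n) -> R :=
  match excluded_middle_informative (mpow n y) with
  | left H => proj1_sig (constructive_indefinite_description _ (hXs n y H))
  | right _ => fun _ => 0 end.

Lemma coefP n y : mpow n y -> mpow n.+1 (y - \sum_i coef n y i * X n i).
Proof.
rewrite /coef; case: excluded_middle_informative => // H _.
by case: constructive_indefinite_description.
Qed.

Definition coord n y : 'rV[k]_(h n) := \row_i proj (coef n y i).
Definition lift n (v : 'rV[k]_(h n)) : R := \sum_i lft (v 0 i) * X n i.
Local Set Implicit Arguments.

Lemma lin_mpow n (r : 'I_(h n) -> R) : mpow n (\sum_i r i * X n i).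
Proof. by apply: mpow_sum => i; apply: mpowM. Qed.

Lemma lift_mpow n v : mpow n (lift n v).
Proof. exact: lin_mpow. Qed.

Lemma coord_uniq n y (r : 'I_(h n) -> R) :
  mpow n y -> mpow n.+1 (y - \sum_i r i * X n i) -> coord n y = \row_i proj (r i).
Proof.
move=> hy hr; apply/rowP => i; rewrite !mxE; apply/(proj_eq hloc).
apply: (hXi n (fun i => coef n y i - r i)).
have -> : \sum_i (coef n y i - r i) * X n i =
   (y - \sum_i r i * X n i) - (y - \sum_i coef n y i * X n i).
  rewrite (eq_bigr (fun i => coef n y i * X n i - r i * X n i)); last by move=> j _; rewrite mulrBl.
  by rewrite sumrB; ring.
by apply: mpowB => //; apply: coefP.
Qed.

Lemma coordD n x y : mpow n x -> mpow n y -> coord n (x + y) = coord n x + coord n y.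
Proof.
move=> hx hy; rewrite (@coord_uniq n (x + y) (fun i => coef n x i + coef n y i)).
- by apply/rowP => i; rewrite !mxE projD.
- exact: mpowD.
have -> : x + y - \sum_i (coef n x i + coef n y i) * X n i =
  (x - \sum_i coef n x i * X n i) + (y - \sum_i coef n y i * X n i).
  rewrite (eq_bigr (fun i => coef n x i * X n i + coef n y i * X n i)); last by move=> j _; rewrite mulrDl.
  by rewrite big_split /=; ring.
by apply: mpowD; apply: coefP.
Qed.

Lemma coordZ n c y : mpow n y -> coord n (c * y) = proj c *: coord n y.
Proof.
move=> hy; rewrite (@coord_uniq n (c * y) (fun i => c * coef n y i)).
- by apply/rowP => i; rewrite !mxE projM.
- exact: mpowM.
have -> : c * y - \sum_i (c * coef n y i) * X n i = c * (y - \sum_i coef n y i * X n i).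
  by rewrite mulrBr mulr_sumr; congr (_ - _); apply: eq_bigr => j _; rewrite mulrA.
by apply: mpowM; apply: coefP.
Qed.

Lemma coord0 n : coord n 0 = 0.
Proof.
rewrite (@coord_uniq n 0 (fun _ => 0)); first by apply/rowP => i; rewrite !mxE proj0.
- exact: mpow0.
rewrite big1 => [|i _]; last by rewrite mul0r.
by rewrite subr0; apply: mpow0.
Qed.

Lemma coordN n y : mpow n y -> coord n (- y) = - coord n y.
Proof. by move=> hy; rewrite -mulN1r coordZ // projN projone scaleN1r. Qed.

Lemma coordB n x y : mpow n x -> mpow n y -> coord n (x - y) = coord n x - coord n y.
Proof. by move=> hx hy; rewrite coordD ?coordN //; apply: mpowN. Qed.

Lemma coord_eq0 n y : mpow n y -> (coord n y = 0 <-> mpow n.+1 y).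
Proof.
move=> hy; split => [h0|hy1].
- have := coefP n y hy; have hc : forall i, maxid (coef n y i).
    move=> i; apply/(proj_eq0 hloc).
    by move/rowP: h0 => /(_ i); rewrite !mxE.
  move=> H; have -> : y = (y - \sum_i coef n y i * X n i) + \sum_i coef n y i * X n i by rewrite subrK.
  apply: mpowD => //; apply: mpow_sum => i.
  by have := mpowMM (proj2 (mpow1 hloc _) (hc i)) (hXm n i); rewrite add1n.
- rewrite (@coord_uniq n y (fun _ => 0)) //; first by apply/rowP => i; rewrite !mxE proj0.
  by rewrite big1 ?subr0 // => i _; rewrite mul0r.
Qed.

Lemma coord_inj n x y : mpow n x -> mpow n y -> coord n x = coord n y -> mpow n.+1 (x - y).
Proof.
move=> hx hy he; apply/(coord_eq0 (mpowB hx hy)).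
by rewrite coordB // he subrr.
Qed.

Lemma coord_eqmod n x y : mpow n x -> mpow n y -> mpow n.+1 (x - y) -> coord n x = coord n y.
Proof.
move=> hx hy hxy; apply/eqP; rewrite -subr_eq0 -coordB //; apply/eqP.
by apply/coord_eq0 => //; apply: mpowB.
Qed.

Lemma coord_lift n v : coord n (lift n v) = v.
Proof.
rewrite (@coord_uniq n (lift n v) (fun i => lft (v 0 i))).
- by apply/rowP => i; rewrite !mxE lftK.
- exact: lift_mpow.
by rewrite subrr; apply: mpow0.
Qed.

Lemma lift_coord n y : mpow n y -> mpow n.+1 (y - lift n (coord n y)).
Proof. by move=> hy; apply: coord_inj => //; [exact: lift_mpow|rewrite coord_lift]. Qed.

Lemma coord_sum n (I : finType) (F : I -> R) :
  (forall i, mpow n (F i)) -> coord n (\sum_i F i) = \sum_i coord n (F i).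
Proof.
move=> hF.
suff [] : (\sum_i coord n (F i)) = coord n (\sum_i F i) /\ mpow n (\sum_i F i) by [].
apply: (big_ind2 (fun a b => a = coord n b /\ mpow n b)).
- by rewrite coord0; split => //; apply: mpow0.
- by move=> a b c d [-> hb] [-> hd]; rewrite coordD //; split => //; apply: mpowD.
- by move=> i _; split.
Qed.

Definition mulmat (t : R) n : 'M[k]_(h n, h n.+1) :=
  \matrix_(i, j) coord n.+1 (t * X n i) 0 j.

Lemma coordM t n y : maxid t -> mpow n y ->
  coord n.+1 (t * y) = coord n y *m mulmat t n.
Proof.
move=> ht hy.
pose z := \sum_i coef n y i * X n i.
have hz : mpow n z by apply: lin_mpow.
have htX i : mpow n.+1 (t * X n i) by apply: mpow_maxM.
rewrite (@coord_eqmod n.+1 (t * y) (t * z)).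
- rewrite /z mulr_sumr (eq_bigr (fun i => coef n y i * (t * X n i))); last first.
    by move=> i _; rewrite mulrCA mulrA.
  rewrite coord_sum; last by move=> i; apply: mpowM.
  apply/rowP => j; rewrite !mxE summxE; apply: eq_bigr => i _.
  by rewrite coordZ // !mxE.
- exact: mpow_maxM.
- exact: mpow_maxM.
rewrite -mulrBr; have := mpow_maxM ht (coefP n y hy); by [].
Qed.

Hypothesis hm4 : forall x : R, mpow 4 x -> x = 0.

Lemma mpow_big n (x : R) : (4 <= n)%N -> mpow n x -> x = 0.
Proof. by move=> hn hx; apply: hm4; apply: (mpow_le hn). Qed.

Lemma h_big n : (4 <= n)%N -> h n = 0%N.
Proof.
move=> hn; case E: (h n) => [//|d]; exfalso.
pose v : 'rV[k]_(h n) := const_mx 1.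
have : lift n v = 0 by apply: (mpow_big hn); apply: lift_mpow.
move/(congr1 (coord n)); rewrite coord_lift coord0 => /rowP.
have i : 'I_(h n) by rewrite E; exact: ord0.
by move/(_ i); rewrite !mxE => /eqP; rewrite oner_eq0.
Qed.

Lemma rV_big n (v : 'rV[k]_(h n)) : (4 <= n)%N -> v = 0.
Proof.
move=> hn; apply/rowP => i; exfalso.
by case: i => i; rewrite h_big.
Qed.

Lemma coord_nz n y : mpow n y -> ~ mpow n.+1 y -> coord n y != 0.
Proof. by move=> hy hn; apply/eqP => /(coord_eq0 hy). Qed.

Lemma h0 : h 0 = 1%N.
Proof.
pose v0 := coord 0 1.
have nz : v0 != 0 by apply: coord_nz => //; move/(mpow1 hloc); apply: maxid1.
have sub : forall w : 'rV[k]_(h 0), (w <= v0)%MS.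
  move=> w; rewrite -(coord_lift w) -[lift 0 w]mulr1 coordZ //.
  exact/scalemx_sub/submx_refl.
have s1 : ((1%:M : 'M[k]_(h 0)) <= v0)%MS by apply/row_subP => i; apply: sub.
have := mxrankS s1; rewrite mxrank1 rank_rV nz => le1.
have := rank_leq_col v0; rewrite rank_rV nz => ge1.
by apply/eqP; rewrite eqn_leq le1 ge1.
Qed.

Lemma row_mulmat t n i : row i (mulmat t n) = coord n.+1 (t * X n i).
Proof. by apply/rowP => j; rewrite !mxE. Qed.

Lemma coord1_le (v : 'rV[k]_(h 0)) : (v <= coord 0 1)%MS.
Proof.
rewrite -(coord_lift v) -[lift 0 v]mulr1 coordZ //.
exact/scalemx_sub/submx_refl.
Qed.

Section Pair.
Variables t u : R.
Hypothesis ht1 : maxid t.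
Hypothesis ht2 : ~ mpow 2 t.
Hypothesis hu1 : maxid u.
Hypothesis hu2 : ~ mpow 2 u.
Hypothesis htu : forall x, t * x = 0 <-> exists y, x = u * y.
Hypothesis hut : forall x, u * x = 0 <-> exists y, x = t * y.

Lemma tu0 : t * u = 0.
Proof. by apply/htu; exists 1; rewrite mulr1. Qed.

Lemma rank_t1 : (1 <= h 1 - \rank (mulmat t 1))%N.
Proof.
have ht := proj2 (mpow1 hloc _) hu1.
have hk : (coord 1 u <= kermx (mulmat t 1))%MS.
  by apply/sub_kermxP; rewrite -coordM // tu0 coord0.
have := mxrankS hk; rewrite mxrank_ker rank_rV coord_nz //.
Qed.

Lemma mul_utn n : mulmat u n *m mulmat t n.+1 = 0.
Proof.
apply/row_matrixP => i; rewrite row_mul row0 row_mulmat -coordM //.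
- by rewrite mulrA tu0 mul0r coord0.
- exact: mpow_maxM.
Qed.

Lemma ker_t2 (v : 'rV[k]_(h 2)) : v *m mulmat t 2 = 0 -> (v <= mulmat u 1)%MS.
Proof.
move=> hv; pose y := lift 2 v.
have hy : mpow 2 y by apply: lift_mpow.
have ty0 : t * y = 0.
  apply: hm4; apply/(coord_eq0 (mpow_maxM ht1 hy)).
  by rewrite coordM // coord_lift.
have [w yw] := proj1 (htu y) ty0.
have hw : maxid w.
  move=> [w' ww']; apply: hu2.
  have -> : u = y * w' by rewrite yw -mulrA ww' mulr1.
  exact: mpowMr.
have hw1 : mpow 1 w by apply/(mpow1 hloc).
have -> : v = coord 2 y by rewrite coord_lift.
by rewrite yw coordM // submxMl.
Qed.

Lemma rank_t2 : \rank (mulmat t 2) = (h 2 - \rank (mulmat u 1))%N.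
Proof.
have e : \rank (kermx (mulmat t 2)) = \rank (mulmat u 1).
  apply/eqP; rewrite eqn_leq !mxrankS //.
    by apply/sub_kermxP; apply: mul_utn.
  by apply/row_subP => i; apply: ker_t2; rewrite -row_mul mulmx_ker row0.
move: e; rewrite mxrank_ker; have := rank_leq_row (mulmat t 2); lia.
Qed.

Lemma u_ker : (coord 1 u <= kermx (mulmat t 1))%MS.
Proof.
have ht := proj2 (mpow1 hloc _) hu1.
by apply/sub_kermxP; rewrite -coordM // tu0 coord0.
Qed.

Lemma rank_t3 : (h 1 - \rank (mulmat t 1) - 1 <= h 3 - \rank (mulmat t 2))%N.
Proof.
pose K := kermx (mulmat t 1).
pose yi i := lift 1 (row i K).
pose F : 'M[k]_(h 1, h 3) := \matrix_(i, j) coord 3 (t * yi i) 0 j.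
have hyi i : mpow 1 (yi i) by apply: lift_mpow.
have htyi i : mpow 3 (t * yi i).
  apply/(coord_eq0 (mpow_maxM ht1 (hyi i))).
  by rewrite coordM // coord_lift -row_mul mulmx_ker row0.
have core : forall w : 'rV[k]_(h 1),
    (w *m F <= mulmat t 2)%MS -> (w *m K <= coord 1 u)%MS.
  move=> w /submxP [u' hu'].
  pose y := \sum_i lft (w 0 i) * yi i.
  have hy : mpow 1 y by apply: mpow_sum => i; apply: mpowM.
  have cy : coord 1 y = w *m K.
    rewrite coord_sum; last by move=> i; apply: mpowM.
    rewrite mulmx_sum_row; apply: eq_bigr => i _.
    by rewrite coordZ // lftK coord_lift.
  have hty : mpow 3 (t * y).
    by rewrite mulr_sumr; apply: mpow_sum => i; rewrite mulrCA; apply: mpowM.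
  have cty : coord 3 (t * y) = w *m F.
    rewrite mulr_sumr (eq_bigr (fun i => lft (w 0 i) * (t * yi i))); last first.
      by move=> i _; rewrite mulrCA.
    rewrite coord_sum; last by move=> i; apply: mpowM.
    rewrite mulmx_sum_row; apply: eq_bigr => i _.
    rewrite coordZ // lftK; congr (_ *: _).
    by apply/rowP => j; rewrite !mxE.
  pose z := lift 2 u'.
  have hz : mpow 2 z by apply: lift_mpow.
  have ctz : coord 3 (t * z) = u' *m mulmat t 2 by rewrite coordM // coord_lift.
  have e0 : t * (y - z) = 0.
    rewrite mulrBr; apply: hm4; apply: coord_inj => //; first exact: mpow_maxM.
    by rewrite cty ctz hu'.
  have [s hs] := proj1 (htu _) e0.
  have hz1 : mpow 1 z by apply: mpowS.
  have : coord 1 (y - z) = w *m K.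
    by rewrite coordB // cy (proj2 (coord_eq0 hz1) hz) subr0.
  rewrite hs mulrC coordZ //; last by apply/(mpow1 hloc).
  by move <-; apply/scalemx_sub/submx_refl.
pose Gm := F *m cokermx (mulmat t 2).
have [w0 hw0] := submxP u_ker.
have sk : (kermx Gm <= kermx K + w0)%MS.
  apply/row_subP => i; set w := row i (kermx Gm).
  have wG : w *m Gm = 0 by rewrite /w -row_mul mulmx_ker row0.
  have : (w *m F <= mulmat t 2)%MS by rewrite submxE -mulmxA wG.
  move/core/submxP => [D hD].
  have -> : w = (w - D *m w0) + D *m w0 by rewrite subrK.
  apply: addmx_sub_adds; last exact: submxMl.
  by apply/sub_kermxP; rewrite mulmxBl hD -mulmxA -hw0 subrr.
have r1 := mxrankS sk.
have r2 := mxrank_adds_leqif (kermx K) w0.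
move: r1; rewrite mxrank_ker.
have r3 : (\rank Gm <= h 3 - \rank (mulmat t 2))%N by rewrite -mxrank_coker mxrankM_maxr.
have r4 := rank_leq_row w0.
have r5 : \rank (kermx K) = (h 1 - (h 1 - \rank (mulmat t 1)))%N by rewrite !mxrank_ker.
have r6 := rank_leq_row (mulmat t 1).
have r7 := rank_leq_col (mulmat t 2).
case: r2 => r2 _.
lia.
Qed.

End Pair.

Lemma from_ideal (t : R) n x : maxid t ->  mpow n.+1 x -> (coord n.+1 x <= mulmat t n)%MS ->
  exists s', mpow n s' /\ mpow n.+2 (x - t * s').
Proof.
move=> ht1 hx /submxP [w hw]; exists (lift n w); split; first exact: lift_mpow.
apply: coord_inj => //; first by apply: mpow_maxM => //; apply: lift_mpow.
by rewrite hw coordM ?coord_lift //; apply: lift_mpow.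
Qed.

Section Pair2.
Variables t u : R.
Hypothesis ht1 : maxid t.
Hypothesis ht2 : ~ mpow 2 t.
Hypothesis hu1 : maxid u.
Hypothesis hu2 : ~ mpow 2 u.
Hypothesis htu : forall x, t * x = 0 <-> exists y, x = u * y.
Hypothesis hut : forall x, u * x = 0 <-> exists y, x = t * y.
Hypothesis rt0 : \rank (mulmat t 0) = 1%N.
Hypothesis rt1 : \rank (mulmat t 1) = (h 1 - 1)%N.
Hypothesis rt2 : \rank (mulmat t 2) = h 3.
Hypothesis ru0 : \rank (mulmat u 0) = 1%N.
Hypothesis ru1 : \rank (mulmat u 1) = (h 1 - 1)%N.
Hypothesis ru2 : \rank (mulmat u 2) = h 3.
Hypothesis h1pos : (1 <= h 1)%N.

Lemma exact0 (v : 'rV[k]_(h 0)) : v *m mulmat t 0 = 0 -> v = 0.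
Proof.
move=> hv; apply/eqP; rewrite -(mulmx_free_eq0 _ (B := mulmat t 0)) ?hv //.
by rewrite /row_free rt0 h0.
Qed.

Lemma exactS m (v : 'rV[k]_(h m.+1)) :
  v *m mulmat t m.+1 = 0 -> (v <= mulmat u m)%MS.
Proof.
case: m v => [|[|[|m]]] v hv.
- have sk : (mulmat u 0 <= kermx (mulmat t 1))%MS.
    by apply/sub_kermxP; apply: mul_utn.
  have := mxrank_leqif_sup sk; rewrite mxrank_ker rt1 ru0.
  have -> : (h 1 - (h 1 - 1) = 1)%N by lia.
  case=> _ e; have hs : (kermx (mulmat t 1) <= mulmat u 0)%MS by rewrite -e.
  apply: submx_trans hs; exact/sub_kermxP.
- exact: (@ker_t2 t u).
- by apply: submx_full; rewrite /row_full ru2.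
- by rewrite (rV_big v) ?sub0mx.
Qed.

Lemma initial n s : mpow n.+1 (t * s) -> exists s', mpow n s' /\ mpow n.+2 (t * s - t * s').
Proof.
case: n => [|[|[|n]]] hs.
- by exists s; split => //; rewrite subrr; apply: mpow0.
- exists s; split; last by rewrite subrr; apply: mpow0.
  apply/(mpow1 hloc) => -[s1 hs1]; apply: ht2.
  have -> : t = t * s * s1 by rewrite -mulrA hs1 mulr1.
  exact: mpowMr.
- have : (coord 3 (t * s) <= mulmat t 2)%MS by apply: submx_full; rewrite /row_full rt2.
  case/submxP => w hw; exists (lift 2 w); split; first exact: lift_mpow.
  apply: coord_inj => //; first by apply: mpow_maxM => //; apply: lift_mpow.
  by rewrite hw coordM ?coord_lift //; apply: lift_mpow.
- exists 0; split; first exact: mpow0.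
  by rewrite mulr0 subr0 (mpow_big _ hs) //; apply: mpow0.
Qed.

Lemma in_ideal n x : mpow n.+1 x ->
  (exists w s, mpow n.+2 w /\ x = w + t * s) -> (coord n.+1 x <= mulmat t n)%MS.
Proof.
move=> hx [w [s [hw hxe]]].
have hts : mpow n.+1 (t * s).
  have -> : t * s = x - w by rewrite hxe addrC addKr.
  by apply: mpowB => //; apply: mpowS.
have [s' [hs' hd]] := initial hts.
have hts' : mpow n.+1 (t * s') by apply: mpow_maxM.
rewrite (@coord_eqmod n.+1 x (t * s')) //; first by rewrite coordM // submxMl.
have -> : x - t * s' = w + (t * s - t * s') by rewrite hxe addrA.
exact: mpowD.
Qed.


Variables (G : comNzRingType) (pi : nat -> R -> G).
Hypothesis hg : is_assoc_graded pi.

Lemma ann_t (g : G) : pi 1 t * g = 0 -> exists g', g = pi 1 u * g'.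
Proof.
have [N [x [hx ->]]] := gpi_decomp hg g.
move=> hz.
pose xx n := if n is m.+1 then t * x m else 0.
have hxx n : mpow n (xx n).
  by rewrite /xx; case: n => [|m]; [apply: mpow0|apply: mpow_maxM].
have hz' : \sum_(n < N.+1) pi n (xx n) = 0.
  rewrite big_ord_recl (_ : xx ord0 = 0) // (gpi_zero hg) add0r -[RHS]hz mulr_sumr.
  by apply: eq_bigr => i _; rewrite lift0 /xx (gpi_mul1 hg) //; apply/(mpow1 hloc).
have htx n : (n < N)%N -> mpow n.+2 (t * x n).
  by move=> hn; apply: (gpi_comp hg hxx hz' (n := n.+1)).
have hzz n : exists z, mpow n.-1 z /\ ((n < N)%N -> pi n (x n) = pi 1 u * pi n.-1 z).
  case: n => [|m].
    exists 0; split; first exact: mpow0.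
    move=> hN; rewrite (gpi_zero hg) mulr0; apply: (gpi_high hg) => //.
    have e : coord 0 (x 0%N) *m mulmat t 0 = 0.
      by rewrite -coordM //; apply/coord_eq0; [apply: mpow_maxM|apply: htx].
    by apply/(coord_eq0 (hx 0%N)); apply: exact0.
  case: (ltnP m.+1 N) => hN; last first.
    by exists 0; split => [|hN']; [apply: mpow0|exfalso; lia].
  have e : coord m.+1 (x m.+1) *m mulmat t m.+1 = 0.
    by rewrite -coordM //; apply/coord_eq0; [apply: mpow_maxM|apply: htx].
  have [s' [hs' hd]] := from_ideal hu1 (hx m.+1) (exactS e).
  exists s'; split => // _.
  rewrite -(gpi_mul1 hg) //; last exact/(mpow1 hloc).
  exact: (gpi_eqm hg (hx _) (mpow_maxM hu1 hs') hd).
pose z n := proj1_sig (constructive_indefinite_description _ (hzz n)).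
have hzP n : mpow n.-1 (z n) /\ ((n < N)%N -> pi n (x n) = pi 1 u * pi n.-1 (z n)).
  by rewrite /z; case: constructive_indefinite_description.
exists (\sum_(n < N) pi n.-1 (z n)); rewrite mulr_sumr; apply: eq_bigr => n _.
by case: (hzP n) => _; apply.
Qed.

End Pair2.

Lemma rank0 (t : R) : maxid t -> ~ mpow 2 t -> \rank (mulmat t 0) = 1%N.
Proof.
move=> ht1 ht2; apply/eqP; rewrite eqn_leq; apply/andP; split.
  by have := rank_leq_row (mulmat t 0); have := h0; lia.
rewrite lt0n mxrank_eq0; apply/eqP => e.
have : coord 1 (t * 1) = 0 by rewrite coordM // e mulmx0.
rewrite mulr1; apply/eqP; apply: coord_nz => //; exact/(mpow1 hloc).
Qed.

Lemma h1pos (t : R) : maxid t -> ~ mpow 2 t -> (1 <= h 1)%N.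
Proof.
move=> ht1 ht2; have := rank_leq_col (coord 1 t); rewrite rank_rV coord_nz //.
exact/(mpow1 hloc).
Qed.

Section AB.
Variables a b : R.
Hypothesis ha1 : maxid a.
Hypothesis ha2 : ~ mpow 2 a.
Hypothesis hb1 : maxid b.
Hypothesis hb2 : ~ mpow 2 b.
Hypothesis hab : forall x, a * x = 0 <-> exists y, x = b * y.
Hypothesis hba : forall x, b * x = 0 <-> exists y, x = a * y.
Hypothesis hsum : \sum_(n < 4) (-1) ^+ n * (h n)%:Z = 0.

Lemma hsumN : (h 0 + h 2 = h 1 + h 3)%N.
Proof. by move: hsum; rewrite !big_ord_recr big_ord0 /= add0r => H; lia. Qed.

Lemma ranks : [/\ \rank (mulmat a 1) = (h 1 - 1)%N, \rank (mulmat b 1) = (h 1 - 1)%N,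
   \rank (mulmat a 2) = h 3 & \rank (mulmat b 2) = h 3].
Proof.
have := @rank_t1 a b ha1 hb1 hb2 hab; have := @rank_t1 b a hb1 ha1 ha2 hba.
have := @rank_t2 a b ha1 hb1 hb2 hab; have := @rank_t2 b a hb1 ha1 ha2 hba.
have := rank_leq_col (mulmat a 2); have := rank_leq_col (mulmat b 2).
have := rank_leq_col (mulmat a 1); have := rank_leq_col (mulmat b 1).
have := hsumN; have := h0.
move=> *; split; lia.
Qed.

Variables (G : comNzRingType) (pi : nat -> R -> G).
Hypothesis hg : is_assoc_graded pi.

Lemma tu0' (t u : R) : (forall x, t * x = 0 <-> exists y, x = u * y) -> t * u = 0.
Proof. by move=> htu; apply/htu; exists 1; rewrite mulr1. Qed.

Lemma pi1_nz (t : R) : maxid t -> ~ mpow 2 t -> pi 1 t != 0.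
Proof.
by move=> ht1 ht2; apply/eqP => /(gpi_eq0 hg (proj2 (mpow1 hloc _) ht1)).
Qed.

Lemma pi1_nunit (t : R) : maxid t -> ~ is_unit (pi 1 t).
Proof.
move=> ht1; have ht : mpow 1 t by apply/(mpow1 hloc).
apply: nil4_not_unit.
have e2 : pi 2 (t * t) = pi 1 t * pi 1 t := gpi_mul hg ht ht.
have h2 : mpow 2 (t * t) := mpowMM ht ht.
have e3 : pi 3 (t * t * t) = pi 2 (t * t) * pi 1 t := gpi_mul hg h2 ht.
have h3 : mpow 3 (t * t * t) := mpowMM h2 ht.
have e4 : pi 4 (t * t * t * t) = pi 3 (t * t * t) * pi 1 t := gpi_mul hg h3 ht.
have h4 : mpow 4 (t * t * t * t) := mpowMM h3 ht.
by rewrite -e2 -e3 -e4 (hm4 h4) (gpi_zero hg).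
Qed.

Lemma pi_ann (t u : R) (g : G) : maxid t -> maxid u ->
  (forall x, t * x = 0 <-> exists y, x = u * y) -> pi 1 t * (pi 1 u * g) = 0.
Proof.
move=> ht1 hu1 htu.
have ht : mpow 1 t by apply/(mpow1 hloc).
have hu : mpow 1 u by apply/(mpow1 hloc).
by rewrite mulrA -(gpi_mul hg ht hu) (tu0' htu) (gpi_zero hg) mul0r.
Qed.

Lemma part1 : exact_pair (pi 1 a) (pi 1 b).
Proof.
have [ra1 rb1 ra2 rb2] := ranks.
have ra0 := rank0 ha1 ha2; have rb0 := rank0 hb1 hb2; have hpos := h1pos ha1 ha2.
split.
- by split; apply: pi1_nz.
- exact: pi1_nunit.
- exact: pi1_nunit.
- move=> g; split; last by move=> [y ->]; apply: pi_ann.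
  exact: (@ann_t a b ha1 hb1 hb2 hab ra0 ra1 ra2 rb0 rb1 rb2 hpos G pi hg).
- move=> g; split; last by move=> [y ->]; apply: pi_ann.
  exact: (@ann_t b a hb1 ha1 ha2 hba rb0 rb1 rb2 ra0 ra1 ra2 hpos G pi hg).
Qed.

Variables (S : comNzRingType) (q : {rmorphism R -> S}).
Hypothesis hqs : forall y : S, exists x, q x = y.
Hypothesis hqk : forall x, q x = 0 <-> exists r, x = a * r.
Variables (G' : comNzRingType) (pi' : nat -> S -> G').
Hypothesis hg' : is_assoc_graded pi'.
Variables (Q : comNzRingType) (rho : {rmorphism G -> Q}).
Hypothesis hrs : forall z : Q, exists g, rho g = z.
Hypothesis hrk : forall g, rho g = 0 <-> exists g', g = pi 1 a * g'.

Lemma qa : q a = 0.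
Proof. by apply/hqk; exists 1; rewrite mulr1. Qed.

Lemma q_max x : maxid x -> maxid (q x).
Proof.
move=> hx [y hy]; have [z hz] := hqs y.
have : q (x * z - 1) = 0 by rewrite rmorphB rmorphM hz hy rmorph1 subrr.
case/hqk => r hr.
have hm : maxid (x * z - (x * z - 1)).
  by apply: (maxidB hloc); [apply: (maxidMr hloc)|rewrite hr; apply: (maxidMr hloc)].
move: hm; rewrite opprB addrC subrK; exact: maxid1.
Qed.

Lemma q_mpow n x : mpow n x -> mpow n (q x).
Proof.
elim: n x => [//|n IH] x /=.
elim=> [|u v hu hv|u v _ IHu _ IHv].
- by rewrite rmorph0; apply: ip_zero.
- by rewrite rmorphM; apply: ip_prod; [apply: q_max|apply: IH].
- by rewrite rmorphD; apply: ip_add.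
Qed.

Lemma liftS n (y : S) : mpow n y -> exists x, mpow n x /\ q x = y.
Proof.
elim: n y => [|n IH] y /=; first by move=> _; have [x hx] := hqs y; exists x.
elim=> [|u v hu hv|u v _ [x1 [h1 e1]] _ [x2 [h2 e2]]].
- by exists 0; split; [apply: ip_zero|rewrite rmorph0].
- have [x1 e1] := hqs u; have [x2 [h2 e2]] := IH v hv.
  exists (x1 * x2); split; last by rewrite rmorphM e1 e2.
  apply: ip_prod => //; move=> [w hw]; apply: hu; exists (q w).
  by rewrite -e1 -rmorphM hw rmorph1.
- by exists (x1 + x2); split; [apply: ip_add|rewrite rmorphD e1 e2].
Qed.

Definition dN (g : G) : nat := proj1_sig (constructive_indefinite_description _ (gpi_decomp hg g)).
Definition dx (g : G) : nat -> R :=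
  proj1_sig (constructive_indefinite_description _
    (proj2_sig (constructive_indefinite_description _ (gpi_decomp hg g)))).
Lemma dP g : (forall n, mpow n (dx g n)) /\ g = \sum_(n < dN g) pi n (dx g n).
Proof.
rewrite /dx /dN; case: (constructive_indefinite_description _ _) => N /= hN.
by case: constructive_indefinite_description.
Qed.

Definition Phi (g : G) : G' := \sum_(n < dN g) pi' n (q (dx g n)).

Lemma pad_mpow N (x : nat -> R) : (forall n, mpow n (x n)) ->
  forall n, mpow n (if (n < N)%N then x n else 0).
Proof. by move=> hx n; case: ifP => _; [apply: hx|apply: mpow0]. Qed.

Lemma widen_q N P (x : nat -> R) : (N <= P)%N ->
  \sum_(n < N) pi' n (q (x n)) = \sum_(n < P) pi' n (q (if (n < N)%N then x n else 0)).
Proof.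
move=> hNP; rewrite (@widen_sum _ _ pi' hg' N P (fun n => q (x n)) hNP).
by apply: eq_bigr => i _; case: ifP => _; rewrite ?rmorph0.
Qed.

Lemma Phi_spec N (x : nat -> R) : (forall n, mpow n (x n)) ->
  Phi (\sum_(n < N) pi n (x n)) = \sum_(n < N) pi' n (q (x n)).
Proof.
move=> hx; set g := \sum_(n < N) pi n (x n).
have [hd he] := dP g.
pose P := (N + dN g)%N.
pose xa n := if (n < N)%N then x n else 0.
pose xb n := if (n < dN g)%N then dx g n else 0.
have hxa := pad_mpow N hx; have hxb := pad_mpow (dN g) hd.
have D : \sum_(n < P) pi n (xb n - xa n) = 0.
  rewrite (eq_bigr (fun n : 'I_P => pi n (xb n) - pi n (xa n))); last first.
    by move=> i _; rewrite (gpi_sub hg).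
  rewrite sumrB -(widen_sum hg _ (leq_addl N (dN g))) -(widen_sum hg _ (leq_addr (dN g) N)).
  by rewrite -he /g subrr.
have hxab n : mpow n (xb n - xa n) by apply: mpowB.
have C := gpi_comp hg hxab D.
rewrite /Phi (widen_q _ (leq_addl N (dN g))) (widen_q _ (leq_addr (dN g) N)).
apply: eq_bigr => i _; apply: (gpi_eqm hg'); try apply: q_mpow => //.
by rewrite -rmorphB; apply: q_mpow; apply: C.
Qed.

Lemma Phi_add g1 g2 : Phi (g1 + g2) = Phi g1 + Phi g2.
Proof.
have [h1 e1] := dP g1; have [h2 e2] := dP g2.
pose P := (dN g1 + dN g2)%N.
pose xa n := if (n < dN g1)%N then dx g1 n else 0.
pose xb n := if (n < dN g2)%N then dx g2 n else 0.
have hxa := pad_mpow (dN g1) h1; have hxb := pad_mpow (dN g2) h2.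
have E : g1 + g2 = \sum_(n < P) pi n (xa n + xb n).
  rewrite {1}e1 {1}e2 (widen_sum hg _ (leq_addr (dN g2) (dN g1))).
  rewrite (widen_sum hg _ (leq_addl (dN g1) (dN g2))) -big_split /=.
  by apply: eq_bigr => i _; rewrite (gpi_add hg).
have hxab n : mpow n (xa n + xb n) by apply: mpowD.
rewrite E (@Phi_spec P _ hxab) /Phi.
rewrite (widen_q _ (leq_addr (dN g2) (dN g1))) (widen_q _ (leq_addl (dN g1) (dN g2))).
rewrite -big_split /=; apply: eq_bigr => i _.
by rewrite rmorphD (gpi_add hg') //; apply: q_mpow.
Qed.

Lemma Phi0 : Phi 0 = 0.
Proof.
have := @Phi_spec 0 (fun _ => 0) (fun n => @mpow0 R n).
by rewrite !big_ord0.
Qed.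

Lemma Phi_opp g : Phi (- g) = - Phi g.
Proof. by apply/eqP; rewrite -addr_eq0 -Phi_add addNr Phi0. Qed.

Lemma Phi_sum (I : finType) (F : I -> G) : Phi (\sum_i F i) = \sum_i Phi (F i).
Proof.
apply: (big_ind2 (fun a b => Phi a = b)) => //; first exact: Phi0.
by move=> x1 x2 y1 y2 <- <-; apply: Phi_add.
Qed.

Lemma Phi_hom n x : mpow n x -> Phi (pi n x) = pi' n (q x).
Proof.
move=> hx; pose F m := if m == n then x else 0.
have hF m : mpow m (F m) by rewrite /F; case: eqP => [->|_] //; apply: mpow0.
have := @Phi_spec n.+1 F hF.
rewrite (gsingle hg); last by move=> m hm; rewrite /F; case: eqP => // e; rewrite e ltnn in hm.
rewrite (@gsingle _ _ pi' hg' n (fun m => q (F m))); last by move=> m hm; rewrite /F; case: eqP => [e|_]; [rewrite e ltnn in hm|rewrite rmorph0].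
by rewrite /F eqxx.
Qed.

Lemma Phi_mul g1 g2 : Phi (g1 * g2) = Phi g1 * Phi g2.
Proof.
have [h1 e1] := dP g1; have [h2 e2] := dP g2.
move: h1 e1 h2 e2; move: (dN g1) (dx g1) (dN g2) (dx g2) => N1 x1 N2 x2 h1 e1 h2 e2.
rewrite e1 e2 (Phi_spec _ h1) (Phi_spec _ h2) mulr_suml Phi_sum mulr_suml.
apply: eq_bigr => i _; rewrite !mulr_sumr Phi_sum; apply: eq_bigr => j _.
rewrite -(gpi_mul hg) // Phi_hom; last exact: mpowMM.
by rewrite rmorphM (gpi_mul hg') //; apply: q_mpow.
Qed.

Lemma Phi1 : Phi 1 = 1.
Proof.
by rewrite -(gpi01 hg) Phi_hom // rmorph1 (gpi01 hg').
Qed.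

Lemma Phi_kill g : Phi (pi 1 a * g) = 0.
Proof.
by rewrite Phi_mul Phi_hom ?qa ?(gpi_zero hg') ?mul0r //; apply/(mpow1 hloc).
Qed.

Definition psi (z : Q) : G' := Phi (proj1_sig (constructive_indefinite_description _ (hrs z))).

Lemma psi_rho g : psi (rho g) = Phi g.
Proof.
rewrite /psi; case: constructive_indefinite_description => g0 /= e.
have : rho (g0 - g) = 0 by rewrite rmorphB e subrr.
case/hrk => g' hg'0.
have -> : g0 = g + pi 1 a * g' by rewrite -hg'0 addrC subrK.
by rewrite Phi_add Phi_kill addr0.
Qed.

Lemma psi_zmod : zmod_morphism psi.
Proof.
move=> z1 z2; have [g1 <-] := hrs z1; have [g2 <-] := hrs z2.
by rewrite -rmorphB !psi_rho Phi_add Phi_opp.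
Qed.

Lemma psi_monoid : monoid_morphism psi.
Proof.
split; first by rewrite -(rmorph1 rho) psi_rho Phi1.
move=> z1 z2; have [g1 <-] := hrs z1; have [g2 <-] := hrs z2.
by rewrite -rmorphM !psi_rho Phi_mul.
Qed.

HB.instance Definition _ := GRing.isZmodMorphism.Build Q G' psi psi_zmod.
HB.instance Definition _ := GRing.isMonoidMorphism.Build Q G' psi psi_monoid.

Definition psiR : {rmorphism Q -> G'} := psi.

Lemma Phi_ker g : Phi g = 0 -> exists g', g = pi 1 a * g'.
Proof.
have [hx e] := dP g; move: hx e; move: (dN g) (dx g) => N x hx ->.
have [ra1 rb1 ra2 rb2] := ranks.
rewrite (Phi_spec _ hx) => h0'.
have hqx n : mpow n (q (x n)) by apply: q_mpow.
have C := gpi_comp hg' hqx h0'.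
apply: (@factor_sum _ _ pi a N x) => n.
case: (ltnP n N) => hn; last by exists 0; split => [|hn']; [apply: mpow0|exfalso; lia].
have [w [hw ew]] := liftS (C n hn).
have : q (x n - w) = 0 by rewrite rmorphB ew subrr.
case/hqk => r hr.
have hxe : x n = w + a * r by rewrite -hr addrC subrK.
case: n hn hw ew hr hxe => [|m] hn hw ew hr hxe.
  exists 0; split => [|_]; first exact: mpow0.
  rewrite (gpi_zero hg) mulr0; apply: (gpi_high hg); rewrite hxe.
  apply: mpowD => //; apply/(mpow1 hloc); exact: (maxidMr hloc).
have hin := in_ideal ha1 ha2 ra2 (hx m.+1) (ex_intro _ w (ex_intro _ r (conj hw hxe))).
have [s' [hs' hd]] := from_ideal ha1 (hx m.+1) hin.
exists s'; split => // _.
rewrite -(gpi_mul1 hg) //; last exact/(mpow1 hloc).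
exact: (gpi_eqm hg (hx _) (mpow_maxM ha1 hs') hd).
Qed.

Lemma psi_inj : injective psi.
Proof.
move=> z1 z2 e; have [g hg0] := hrs (z1 - z2).
have : Phi g = 0 by rewrite -psi_rho hg0 (rmorphB psiR) /= e subrr.
case/Phi_ker => g' hg''.
by apply/eqP; rewrite -subr_eq0 -hg0; apply/eqP/hrk; exists g'.
Qed.

Lemma psi_surj y : exists z, psi z = y.
Proof.
have [N [yy [hy ->]]] := gpi_decomp hg' y.
have hl n : exists x, mpow n x /\ q x = yy n by apply: liftS.
pose x n := proj1_sig (constructive_indefinite_description _ (hl n)).
have hxP n : mpow n (x n) /\ q (x n) = yy n.
  by rewrite /x; case: constructive_indefinite_description.
exists (rho (\sum_(n < N) pi n (x n))).
rewrite psi_rho Phi_spec; last by move=> n; case: (hxP n).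
by apply: eq_bigr => n _; case: (hxP n) => _ ->.
Qed.

Lemma psi_bij : bijective psiR.
Proof.
pose inv y := proj1_sig (constructive_indefinite_description _ (psi_surj y)).
have invP y : psi (inv y) = y by rewrite /inv; case: constructive_indefinite_description.
exists inv => z; last exact: invP.
by apply: psi_inj; rewrite invP.
Qed.

Lemma part2 : exists psi0 : {rmorphism Q -> G'}, bijective psi0 /\
     forall n x, mpow n x -> psi0 (rho (pi n x)) = pi' n (q x).
Proof.
exists psiR; split; first exact: psi_bij.
by move=> n x hx; rewrite /= psi_rho Phi_hom.
Qed.

Definition Qhom := fun m (z : Q) => exists g, gr_hom pi m g /\ z = rho g.

Lemma compl_span n p (W : 'M[k]_(p, h n)) (v : 'rV[k]_(h n)) :
  exists c : 'rV[k]_(\rank (W^C)%MS), (v - c *m row_base (W^C)%MS <= W)%MS.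
Proof.
have : (v <= W + W^C)%MS by apply: submx_full; apply: addsmx_compl_full.
case/sub_addsmxP => [[u1 u2]] /= ->.
have : (u2 *m W^C <= row_base (W^C))%MS by rewrite eq_row_base submxMl.
case/submxP => c ->; exists c.
by rewrite addrK submxMl.
Qed.

Lemma compl_free n p (W : 'M[k]_(p, h n)) (c : 'rV[k]_(\rank (W^C)%MS)) :
  (c *m row_base (W^C)%MS <= W)%MS -> c = 0.
Proof.
move=> hc.
have hc2 : (c *m row_base (W^C)%MS <= W^C)%MS.
  by rewrite -(eq_row_base (W^C)%MS) submxMl.
have : (c *m row_base (W^C)%MS <= W :&: W^C)%MS by rewrite sub_capmx hc hc2.
rewrite capmx_compl submx0 (mulmx_free_eq0 _ (row_base_free _)).
by move/eqP.
Qed.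

Lemma coord_comb n d (E : 'M[k]_(d, h n)) (t : 'I_d -> R) :
  coord n (\sum_i t i * lift n (row i E)) = (\row_i proj (t i)) *m E.
Proof.
rewrite coord_sum; last by move=> i; apply: mpowM; apply: lift_mpow.
rewrite mulmx_sum_row; apply: eq_bigr => i _.
by rewrite coordZ ?coord_lift ?mxE //; apply: lift_mpow.
Qed.

Lemma basis_gen n p (W : 'M[k]_(p, h n)) :
  (forall x, mpow n x -> (coord n x <= W)%MS -> exists w, mpow n.+1 w /\ q x = q w) ->
  (forall x, mpow n x -> (coord n x <= W)%MS -> rho (pi n x) = 0) ->
  (forall x, mpow n x -> (exists w r, mpow n.+1 w /\ x = w + a * r) -> (coord n x <= W)%MS) ->
  hilb_rank S n (\rank (W^C)%MS) /\ graded_rank Qhom n (\rank (W^C)%MS).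
Proof.
move=> HS HQ HI.
set d := \rank (W^C)%MS.
pose E := row_base (W^C)%MS.
pose y i := lift n (row i E).
have hy i : mpow n (y i) by apply: lift_mpow.
have hcomb (t : 'I_d -> R) : mpow n (\sum_i t i * y i).
  by apply: mpow_sum => i; apply: mpowM.
have indep (t : 'I_d -> R) : (exists w r, mpow n.+1 w /\ \sum_i t i * y i = w + a * r) ->
    forall i, maxid (t i).
  move=> hex i; have := HI _ (hcomb t) hex.
  rewrite coord_comb => /compl_free /rowP /(_ i); rewrite !mxE.
  by move/(proj_eq0 hloc).
split.
- exists (fun i => q (y i)); split; first by move=> i; apply: q_mpow.
  split.
  + move=> y0 /liftS [x [hx <-]].
    have [c hc] := compl_span W (coord n x).
    exists (fun i => q (lft (c 0 i))).
    pose x' := x - \sum_i lft (c 0 i) * y i.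
    have hx' : mpow n x' by apply: mpowB.
    have : (coord n x' <= W)%MS.
      by rewrite coordB // coord_comb; congr (_ <= _)%MS: hc; congr (_ - _ *m _);
        apply/rowP => i; rewrite !mxE lftK.
    case/(HS _ hx') => w [hw ew].
    have -> : q x - \sum_i q (lft (c 0 i)) * q (y i) = q x'.
      by rewrite rmorphB rmorph_sum; congr (_ - _); apply: eq_bigr => i _; rewrite rmorphM.
    by rewrite ew; apply: q_mpow.
  + move=> r hr i.
    have hl j : exists t, q t = r j by apply: hqs.
    pose t j := proj1_sig (constructive_indefinite_description _ (hl j)).
    have ht j : q (t j) = r j by rewrite /t; case: constructive_indefinite_description.
    rewrite -ht; apply: q_max; apply: indep.
    have : mpow n.+1 (q (\sum_j t j * y j)).
      rewrite rmorph_sum (eq_bigr (fun j => r j * q (y j))) //.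
      by move=> j _; rewrite rmorphM ht.
    case/liftS => w [hw ew]; exists w.
    have : q (\sum_j t j * y j - w) = 0 by rewrite rmorphB ew subrr.
    case/hqk => r' hr'; exists r'; split => //.
    by rewrite -hr' addrC subrK.
- exists (fun i => rho (pi n (y i))); split.
    by move=> i; exists (pi n (y i)); split => //; exists (y i).
  split.
  + move=> z [g [[x [hx ->]] ->]].
    have [c hc] := compl_span W (coord n x).
    exists (fun i => rho (pi 0 (lft (c 0 i)))); split.
      by move=> i; exists (pi 0 (lft (c 0 i))); split => //; exists (lft (c 0 i)).
    pose x' := x - \sum_i lft (c 0 i) * y i.
    have hx' : mpow n x' by apply: mpowB.
    have : (coord n x' <= W)%MS.
      by rewrite coordB // coord_comb; congr (_ <= _)%MS: hc; congr (_ - _ *m _);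
        apply/rowP => i; rewrite !mxE lftK.
    move/(HQ _ hx'); rewrite /x' (gpi_sub hg) // rmorphB (gpi_sum hg); last first.
      by move=> i; apply: mpowM.
    rewrite rmorph_sum => /eqP; rewrite subr_eq0 => /eqP ->.
    apply: eq_bigr => i _; rewrite -rmorphM.
    by congr (rho _); exact: (gpi_mul hg (I : @mpow R 0 _) (hy i)).
  + move=> cc hcc hs i.
    have hl j : exists t, cc j = rho (pi 0 t).
      by have [g [[t [_ ->]] ->]] := hcc j; exists t.
    pose t j := proj1_sig (constructive_indefinite_description _ (hl j)).
    have ht j : cc j = rho (pi 0 (t j)) by rewrite /t; case: constructive_indefinite_description.
    have hmi : maxid (t i).
      apply: indep.
      have e0 : rho (pi n (\sum_j t j * y j)) = 0.
        rewrite (gpi_sum hg); last by move=> j; apply: mpowM.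
        rewrite rmorph_sum -[RHS]hs; apply: eq_bigr => j _.
        by rewrite ht -rmorphM; congr (rho _); exact: (gpi_mul hg (I : @mpow R 0 _) (hy j)).
      have : pi' n (q (\sum_j t j * y j)) = 0.
        by rewrite -Phi_hom // -psi_rho e0 (rmorph0 psiR).
      move/(gpi_eq0 hg' (q_mpow (hcomb t))).
      case/liftS => w [hw ew]; exists w.
      have : q (\sum_j t j * y j - w) = 0 by rewrite rmorphB ew subrr.
      case/hqk => r' hr'; exists r'; split => //.
      by rewrite -hr' addrC subrK.
    rewrite ht (gpi_high hg) ?rmorph0 //; exact/(mpow1 hloc).
Qed.

Definition cc n : nat := match n with 0 => 1%N | 1 => (h 1 - 1)%N | 2 => h 3 | _ => 0%N end.

Lemma part3_n n : hilb_rank S n (cc n) /\ graded_rank Qhom n (cc n).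
Proof.
have [ra1 rb1 ra2 rb2] := ranks.
have hpos := h1pos ha1 ha2; have hs := hsumN; have e0 := h0.
case: n => [|m].
  have := @basis_gen 0 (h 0) 0.
  have -> : \rank (0 : 'M[k]_(h 0))^C = cc 0 by rewrite mxrank_compl mxrank0 subn0 e0.
  apply.
  - move=> x hx; rewrite submx0 => /eqP c0; exists x; split => //.
    exact/(coord_eq0 hx).
  - move=> x hx; rewrite submx0 => /eqP c0.
    by rewrite (gpi_high hg) ?rmorph0 //; apply/(coord_eq0 hx).
  - move=> x hx [w [r [hw hxe]]].
    have hx1 : mpow 1 x.
      by rewrite hxe; apply: mpowD => //; apply/(mpow1 hloc); apply: (maxidMr hloc).
    by rewrite (proj2 (coord_eq0 hx) hx1) sub0mx.
have := @basis_gen m.+1 (h m) (mulmat a m).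
have -> : \rank (mulmat a m)^C = cc m.+1.
  rewrite mxrank_compl; case: m => [|[|[|m]]] /=.
  - by rewrite rank0.
  - by rewrite ra1; lia.
  - by rewrite ra2 subnn.
  - have := rank_leq_col (mulmat a m.+3); have : h m.+4 = 0%N by rewrite h_big.
    by lia.
apply.
- move=> x hx /(from_ideal ha1 hx) [s' [hs' hd]].
  exists (x - a * s'); split => //.
  by rewrite rmorphB rmorphM qa mul0r subr0.
- move=> x hx /(from_ideal ha1 hx) [s' [hs' hd]].
  apply/hrk; exists (pi m s').
  rewrite -(gpi_mul1 hg) //; last exact/(mpow1 hloc).
  exact: (gpi_eqm hg hx (mpow_maxM ha1 hs') hd).
- by move=> x hx hex; apply: (in_ideal ha1 ha2 ra2 hx hex).
Qed.

Definition Tsum n : int := \sum_(i < n.+1) (-1) ^+ (n - i) * (h i)%:Z.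

Lemma Tsum_S n : Tsum n.+1 = (h n.+1)%:Z - Tsum n.
Proof.
rewrite /Tsum big_ord_recr /= subnn expr0 mul1r addrC; congr (_ + _).
rewrite -sumrN; apply: eq_bigr => i _.
by rewrite /= subSn ?exprS ?mulN1r ?mulNr // -ltnS.
Qed.

Lemma cc_sum n : (cc n)%:Z = Tsum n.
Proof.
have hpos := h1pos ha1 ha2; have hs := hsumN; have e0 := h0.
have T0 : Tsum 0 = 1 by rewrite /Tsum big_ord_recr big_ord0 /= add0r expr0 mul1r e0.
have T1 : Tsum 1 = (h 1)%:Z - 1 by rewrite Tsum_S T0.
have T2 : Tsum 2 = (h 3)%:Z by rewrite Tsum_S T1; lia.
have T3 : Tsum 3 = 0 by rewrite Tsum_S T2 subrr.
have Tb m : Tsum m.+3 = 0.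
  elim: m => [//|m IH]; by rewrite Tsum_S IH subr0 h_big.
case: n => [|[|[|m]]] /=; rewrite ?T0 ?T1 ?T2 ?Tb //; lia.
Qed.

Lemma main_sec : exact_pair (pi 1 a) (pi 1 b) /\
  (exists psi0 : {rmorphism Q -> G'}, bijective psi0 /\
     forall n x, mpow n x -> psi0 (rho (pi n x)) = pi' n (q x)) /\
  (exists c : nat -> nat,
     (forall n, (c n)%:Z = \sum_(i < n.+1) (-1) ^+ (n - i) * (h i)%:Z) /\
     (forall n, graded_rank (fun m z => exists g, gr_hom pi m g /\ z = rho g) n (c n)) /\
     (forall n, hilb_rank S n (c n))).
Proof.
split; first exact: part1.
split; first exact: part2.
exists cc; split; first exact: cc_sum.
by split => n; case: (part3_n n).
Qed.

End AB.

End Coord.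


Unset Implicit Arguments.

Theorem theorem2p5
  (R : comNzRingType) (a b : R)
  (* the Hilbert function h = (rank_k m^n/m^(n+1))_n of R *)
  (h : nat -> nat)
  (* gr_m(R) *)
  (G : comNzRingType) (pi : nat -> R -> G)
  (* R/aR, with the canonical surjection q *)
  (S : comNzRingType) (q : {rmorphism R -> S})
  (* gr_{m/aR}(R/aR) *)
  (G' : comNzRingType) (pi' : nat -> S -> G')
  (* gr_m(R)/a* gr_m(R), with the canonical surjection rho *)
  (Q : comNzRingType) (rho : {rmorphism G -> Q}) :
  noetherian R -> local_ring R ->
  (forall x : R, mpow 4 x -> x = 0) ->
  (forall n, hilb_rank R n (h n)) ->
  (* H_R(-1) = 0 (H_R is a polynomial of degree <= 3 since m^4 = 0) *)
  \sum_(n < 4) (-1) ^+ n * (h n)%:Z = 0 ->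
  maxid a -> ~ mpow 2 a -> maxid b -> ~ mpow 2 b ->
  exact_pair a b ->
  is_assoc_graded pi ->
  (forall y : S, exists x, q x = y) ->
  (forall x, q x = 0 <-> exists r, x = a * r) ->
  is_assoc_graded pi' ->
  (forall z : Q, exists g, rho g = z) ->
  (forall g, rho g = 0 <-> exists g', g = pi 1%N a * g') ->
  (* (1) *)
  exact_pair (pi 1%N a) (pi 1%N b) /\
  (* (2) the map gr/a*gr -> gr(R/aR) induced by R -> R/aR is an isomorphism *)
  (exists psi : {rmorphism Q -> G'}, bijective psi /\
     forall n x, mpow n x -> psi (rho (pi n x)) = pi' n (q x)) /\
  (* (3) H_{gr/a*gr}(t) = H_{R/aR}(t) = H_R(t) (1+t)^-1 *)
  (exists c : nat -> nat,
     (forall n, (c n)%:Z = \sum_(i < n.+1) (-1) ^+ (n - i) * (h i)%:Z) /\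
     (forall n, graded_rank (fun m z => exists g, gr_hom pi m g /\ z = rho g) n (c n)) /\
     (forall n, hilb_rank S n (c n))).
Proof.
move=> _ hloc hm4 hH hsum ha1 ha2 hb1 hb2 [_ _ _ hab hba] hg hqs hqk hg' hrs hrk.
pose X n := proj1_sig (constructive_indefinite_description _ (hH n)).
have hXP n : (forall i, mpow n (X n i)) /\
    (forall y, mpow n y -> exists r : 'I_(h n) -> R, mpow n.+1 (y - \sum_(i < h n) r i * X n i)) /\
    (forall r : 'I_(h n) -> R, mpow n.+1 (\sum_(i < h n) r i * X n i) -> forall i, maxid (r i)).
  by rewrite /X; case: constructive_indefinite_description.
have hXm n i : mpow n (X n i) by case: (hXP n) => H _; apply: H.
have hXs n y : mpow n y -> exists r : 'I_(h n) -> R, mpow n.+1 (y - \sum_(i < h n) r i * X n i).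
  by case: (hXP n) => _ [H _]; apply: H.
have hXi n (r : 'I_(h n) -> R) : mpow n.+1 (\sum_(i < h n) r i * X n i) -> forall i, maxid (r i).
  by case: (hXP n) => _ [_ H]; apply: H.
exact: (main_sec hloc hXm hXs hXi hm4 ha1 ha2 hb1 hb2 hab hba hsum hg hqs hqk hg' hrs hrk).
Qed.
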